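(* Let $p$ be a prime and let $\Phi_p$ be the set of all $F$-pure thresholds $\operatorname{fpt}(R,f)$, where $R$ ranges over all $F$-pure rings of characteristic $p$ and $f$ ranges over all non-zero non-units of $R$. Then for every integer $e\ge 1$ and every $\beta\in[0,1]\cap \frac{1}{p^e}\mathbb{N}$, we have \[ \Phi_p \cap \left(\beta, \tfrac{p^e}{p^e-1}\beta\right)=\emptyset. \]
   Context: A ring $R$ of characteristic $p$ is $F$-pure if the inclusion $R \subseteq R^{1/p}$ splits as a map of $R$-modules; such a ring is reduced. Roots. $R^{1/p^e}$ is the ring of formal $p^e$-th roots $r^{1/p^e}$ of elements $r\in R$. Its operations are $r^{1/p^e}+s^{1/p^e}=(r+s)^{1/p^e}$ and $r^{1/p^e}s^{1/p^e}=(rs)^{1/p^e}$. It contains $R$ via $r\mapsto (r^{p^e})^{1/p^e}$. Powers of $f$. For $a \in\mathbb{N}$, $f^{a/p^e}:=(f^a)^{1/p^e}$. Splitting. For $t\in R^{1/p^e}$, the inclusion $R\cdot t\subseteq R^{1/p^e}$ splits if there is an $R$-linear $\theta:R^{1/p^e}\to R$ with $\theta(t)=1$. Pairs. For $\lambda\ge0$, the pair $(R,f^\lambda)$ is $F$-pure if $R\cdot f^{\lfloor (p^e-1)\lambda\rfloor/p^e}\subseteq R^{1/p^e}$ splits for all $e\geq1$. $F$-pure threshold. $\operatorname{fpt}(R,f)$ is the supremum of all $\lambda\ge0$ with $(R,f^\lambda)$ $F$-pure. *)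

(* Defs.v *)
From HB Require Import structures.
From mathcomp Require Import all_boot all_order all_algebra.
From mathcomp Require Import classical_sets reals Rstruct.
From Stdlib Require Rdefinitions.
Notation R := Rdefinitions.R.
Set Implicit Arguments. Unset Strict Implicit. Unset Printing Implicit Defensive.
Import Order.TTheory GRing.Theory Num.Theory.
Local Open Scope ring_scope.

(* The ring R^{1/p^e} of formal p^e-th roots s^{1/p^e} (s : A) is identified
   with A itself via s^{1/p^e} |-> s.  Under this identification the R-module
   structure is  r . s^{1/p^e} = (r^{p^e} s)^{1/p^e}, i.e. r . s = r^(p^e) * s.
   An R-linear map theta : A^{1/p^e} -> A is thus an additive map
   theta : A -> A with theta (r^(p^e) * s) = r * theta s.
   [root_splits p e s] : the inclusion A . s^{1/p^e} ⊆ A^{1/p^e} splits,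
   i.e. there is an A-linear theta : A^{1/p^e} -> A with theta (s^{1/p^e}) = 1. *)
Definition root_splits (A : comNzRingType) (p e : nat) (s : A) : Prop :=
  exists theta : A -> A,
    (forall x y : A, theta (x + y) = theta x + theta y) /\
    (forall r x : A, theta (r ^+ (p ^ e) * x) = r * theta x) /\
    theta s = 1.

(* A is F-pure: A ⊆ A^{1/p} splits (A = A . 1^{1/p}, the image of 1). *)
Definition F_pure (A : comNzRingType) (p : nat) : Prop :=
  root_splits p 1 (1 : A).

Definition pair_F_pure (A : comNzRingType) (p : nat) (f : A) (lambda : R) : Prop :=
  forall e : nat, (1 <= e)%N ->
    root_splits p e (f ^+ `|Num.floor ((p ^ e - 1)%N%:R * lambda)|%N).

Definition fpt (A : comNzRingType) (p : nat) (f : A) : R :=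
  reals.sup [set lambda : R | (0 <= lambda) /\ pair_F_pure p f lambda]%classic.

Definition is_unit (A : comNzRingType) (f : A) : Prop := exists g : A, f * g = 1.

(* Main.v *)
Require Import Defs.
From HB Require Import structures.
From mathcomp Require Import all_boot all_order all_algebra.
From mathcomp Require Import classical_sets reals Rstruct boolp.
From mathcomp Require Import zify ring lra.
Import Order.TTheory GRing.Theory Num.Theory.
Local Open Scope ring_scope.
Lemma rs_mono (A : comNzRingType) p n (f : A) a a' :
  (a' <= a)%N -> root_splits p n (f ^+ a) -> root_splits p n (f ^+ a').
Proof.
move=> le [th [thD [thM th1]]].
exists (fun x => th (f ^+ (a - a') * x)); split; [|split].
- by move=> x y; rewrite mulrDr thD.
- by move=> r x; rewrite mulrCA thM.
- by rewrite -exprD subnK.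
Qed.

Lemma frobD (A : comNzRingType) p k (x y : A) : p \in [pchar A] ->
  (x + y) ^+ (p ^ k) = x ^+ (p ^ k) + y ^+ (p ^ k).
Proof.
move=> pc; elim: k => [|k IH]; first by rewrite !expn0 !expr1.
by rewrite expnSr !exprM IH -!(pFrobenius_autE pc) rmorphD.
Qed.

Lemma rs_desc (A : comNzRingType) p m k (y : A) : p \in [pchar A] ->
  root_splits p (m + k) (y ^+ (p ^ k)) -> root_splits p m y.
Proof.
move=> pc [th [thD [thM th1]]].
exists (fun x => th (x ^+ (p ^ k))); split; [|split] => //.
- by move=> x z; rewrite frobD // thD.
- by move=> r x; rewrite exprMn -exprM -expnD thM.
Qed.

Lemma rs_comp (A : comNzRingType) p n n2 (f : A) a a2 :
  root_splits p n (f ^+ a) -> root_splits p n2 (f ^+ a2) ->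
  root_splits p (n + n2) (f ^+ (a + p ^ n * a2)).
Proof.
move=> [th [thD [thM th1]]] [ph [phD [phM ph1]]].
exists (fun x => ph (th x)); split; [|split].
- by move=> x y; rewrite thD phD.
- by move=> r x; rewrite expnD mulnC exprM thM phM.
- by rewrite exprD mulnC exprM mulrC thM th1 mulr1.
Qed.

Lemma rs_zero (A : comNzRingType) p (f : A) : root_splits p 0 (f ^+ 0).
Proof.
exists id; split; [by []|split]; last by rewrite expr0.
by move=> r x; rewrite expn0 expr1.
Qed.

Fixpoint ss (b q k : nat) : nat := if k is k'.+1 then (b + q * ss b q k')%N else 0%N.

Lemma ss_eq b q k : (0 < q)%N -> (ss b q k * (q - 1) + b = b * q ^ k)%N.
Proof.
move=> q0; elim: k => [|k IH] /=; first by rewrite mul0n add0n expn0 muln1.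
rewrite expnS mulnCA -IH.
have -> : q = (q - 1).+1 by rewrite subn1 prednK.
rewrite !subSS !subn0. move: (q - 1)%N (ss b (q - 1)%N.+1 k) => d s. nia.
Qed.

Lemma rs_iter (A : comNzRingType) p e (f : A) b k :
  root_splits p e (f ^+ b) -> root_splits p (k * e) (f ^+ ss b (p ^ e) k).
Proof.
move=> h; elim: k => [|k IH] /=; first exact: rs_zero.
by rewrite mulSn; apply: rs_comp.
Qed.
Lemma floor_abs_le (x : R) : 0 <= x -> (`|Num.floor x|%N)%:R <= x.
Proof.
move=> x0; have := floor_le x; have := floor_ge0 x; rewrite x0.
by case: (Num.floor x) => // n _ /=.
Qed.

Lemma floor_abs_ge (n : nat) (x : R) : n%:R <= x -> (n <= `|Num.floor x|%N)%N.
Proof.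
move=> h; have : (n%:Z <= Num.floor x) by rewrite floor_ge_int.
by case: (Num.floor x) => // m /=; rewrite lez_nat.
Qed.

Lemma bound2 (p : nat) (A : comNzRingType) (f : A) (l : R) : (1 < p)%N ->
  ~ is_unit f -> pair_F_pure p f l -> l <= 2.
Proof.
move=> p1 nu hF; rewrite leNgt; apply/negP => l2.
have := hF 1%N isT; set a := `|_|%N => h.
have pa : (p <= a)%N.
  apply: floor_abs_ge; rewrite expn1 natrB ?(ltnW p1) //.
  have : (2%:R <= p%:R :> R) by rewrite ler_nat.
  move=> hp2; nra.
have [th [thD [thM th1]]] := @rs_mono A p 1 f a p pa h.
rewrite -[f ^+ p]mulr1 in th1.
apply: nu; apply: (@ex_intro _ _ (th 1)).
by rewrite -thM expn1.
Qed.

Lemma step1 (p e b : nat) (A : comNzRingType) (f : A) (l : R) : (1 < p)%N -> (1 <= e)%N ->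
  p \in [pchar A] -> ~ is_unit f -> pair_F_pure p f l ->
  b%:R / (p ^ e)%N%:R < l -> root_splits p e (f ^+ b).
Proof.
move=> p1 e1 pc nu hF hl.
have l2 := @bound2 p A f l p1 nu hF.
set q : R := (p ^ e)%N%:R.
have q0 : 0 < q by rewrite ltr0n expn_gt0 ltnW.
have hd : 0 < q * l - b%:R.
  by rewrite subr_gt0 mulrC -ltr_pdivrMr.
set d := q * l - b%:R in hd.
have [k hk] : exists k : nat, 2 / d < k%:R.
  by exists (Num.bound (2 / d)); apply: archi_boundP; rewrite divr_ge0 // ltW.
have hkp : (k%:R <= (p ^ k)%N%:R :> R) by rewrite ler_nat ltnW // ltn_expl.
set P : R := (p ^ k)%N%:R in hkp.
have hPd : 2 <= P * d.
  have : 2 / d * d = 2 by rewrite mulfVK // gt_eqF.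
  move=> <-; rewrite ler_pM2r //; apply: ltW; apply: lt_le_trans hk hkp.
have := hF (e + k)%N (leq_trans e1 (leq_addr _ _)).
set a := `|_|%N => h.
have ha : (b * p ^ k <= a)%N.
  apply: floor_abs_ge.
  rewrite natrB; last by rewrite expn_gt0 ltnW.
  rewrite natrM expnD natrM -/q -/P.
  rewrite -subr_ge0.
  have -> : (q * P - 1) * l - b%:R * P = P * d - l by rewrite /d; ring.
  lra.
have := @rs_mono A p (e + k) f a _ ha h.
rewrite exprM; exact: (@rs_desc A p e k (f ^+ b) pc).
Qed.

Lemma step2 (p e b : nat) (A : comNzRingType) (f : A) : (1 < p)%N -> (1 <= e)%N ->
  p \in [pchar A] -> root_splits p e (f ^+ b) ->
  pair_F_pure p f (b%:R / ((p ^ e)%N%:R - 1)).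
Proof.
move=> p1 e1 pc hb m m1.
set a := `|_|%N.
set q := (p ^ e)%N.
have q2 : (2 <= q)%N.
  by rewrite /q; apply: (leq_trans p1); rewrite -{1}(expn1 p) leq_pexp2l // ltnW.
have hq : ((p ^ e)%N%:R - 1 : R) = (q - 1)%N%:R by rewrite natrB ?(ltnW q2).
rewrite hq in a *.
have ha : (a * (q - 1) <= (p ^ m - 1) * b)%N.
  rewrite -(ler_nat R) natrM; rewrite -ler_pdivlMr; last by rewrite ltr0n subn_gt0.
  rewrite natrM -mulrA; apply: floor_abs_le.
  by rewrite mulr_ge0 // divr_ge0.
have := @rs_iter A p e f b m hb; rewrite -/q.
have hme : (m * e = m + (m * e - m))%N by rewrite subnKC // leq_pmulr.
rewrite hme => h.
apply: (@rs_desc A p m (m * e - m)%N) => //; rewrite -exprM.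
apply: (@rs_mono A p _ f _ _ _ h).
have := @ss_eq b q m (ltnW q2); rewrite -/q.
have : (q ^ m = p ^ m * p ^ (m * e - m))%N by rewrite -expnD -hme /q -expnM mulnC.
set Y := (p ^ (m * e - m))%N; set X := (p ^ m)%N; set s := ss b q m.
have X1 : (1 <= X)%N by rewrite expn_gt0 ltnW.
have Y1 : (1 <= Y)%N by rewrite expn_gt0 ltnW.
move=> hqm hs.
rewrite -(leq_pmul2r (_ : 0 < q - 1)%N); last by rewrite subn_gt0.
rewrite hqm in hs.
apply: (@leq_trans (Y * ((X - 1) * b))%N).
  by rewrite mulnAC mulnC leq_mul2l ha orbT.
have -> : (s * (q - 1) = b * (X * Y) - b)%N by rewrite -hs addnK.
have hYb : (b <= Y * b)%N by rewrite leq_pmull.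
rewrite mulnA mulnBr muln1 mulnBl (mulnC b (X * Y)) (mulnC Y X).
move: hYb; move: (X * Y * b)%N (Y * b)%N => u v; lia.
Qed.

Theorem mainTheorem2 (p : nat) (hp : prime p) (e : nat) (he : (1 <= e)%N)
  (b : nat) (hb : (b <= p ^ e)%N) :
  let beta : R := b%:R / (p ^ e)%N%:R in
  forall (A : comNzRingType) (f : A),
    p \in [pchar A] -> F_pure A p -> f != 0 -> ~ is_unit f ->
    ~ (beta < fpt p f < (p ^ e)%N%:R / ((p ^ e)%N%:R - 1) * beta).
Proof.
move=> beta A f pc _ _ nu /andP[lo hi].
have p1 : (1 < p)%N by apply: prime_gt1.
have q0 : (0 : R) < (p ^ e)%N%:R by rewrite ltr0n expn_gt0 ltnW.
have q2 : (2 <= p ^ e)%N.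
  by apply: (leq_trans p1); rewrite -{1}(expn1 p) leq_pexp2l // ltnW.
have q1 : (1 : R) < (p ^ e)%N%:R by rewrite ltr1n.
have beta0 : 0 <= beta by rewrite divr_ge0 // ltW.
move: lo hi; rewrite /fpt.
set S := [set lambda : R | _]%classic => lo hi.
have [hs|nhs] := pselect (has_sup S); last first.
  by move: lo; rewrite sup_out // ltNge beta0.
have eps0 : 0 < sup S - beta by rewrite subr_gt0.
have [l Sl hl] := sup_adherent eps0 hs.
have hl' : beta < l by move: hl; rewrite opprB addrCA subrr addr0.
have hbs := @step1 p e b A f l p1 he pc nu (proj2 Sl) hl'.
have hc := @step2 p e b A f p1 he pc hbs.
have Sc : S (b%:R / ((p ^ e)%N%:R - 1)).
  split => //; rewrite divr_ge0 // subr_ge0 ltW //.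
have := sup_upper_bound hs Sc.
have E : (p ^ e)%N%:R / ((p ^ e)%N%:R - 1) * beta = b%:R / ((p ^ e)%N%:R - 1) :> R.
  rewrite /beta; field; rewrite ?gt_eqF // subr_gt0 //.
by rewrite E in hi; rewrite leNgt hi.
Qed.
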